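(* Let $1\le p,q<\infty$, $\theta>0$, and let $E$ be a bounded Lebesgue measurable subset of $\mathbb R$. Then: (a) $\chi_E\in l^{q),\theta}(L^p)$; (b) $\chi_E\in l^{q)',\theta}(L^p)$; (c) there exists a constant $c_E>0$ such that $\int_E|g(x)|\,dx\le c_E\|g\|_{p,q),\theta}$ for every measurable function $g\in l^{q),\theta}(L^p)$.
   Context: Index set $\mathbb Z$, $I_k=[k,k+1)$. The space $l^{q),\theta}(L^p)$ consists of complex-valued measurable $g$ on $\mathbb R$ with $g\chi_{I_k}\in L^p$ for all $k$ and $\|g\|_{p,q),\theta}:=\sup_{\varepsilon>0}\Big(\varepsilon^{\theta}\sum_{k\in\mathbb Z}\big(\int_{I_k}|g|^p\big)^{\frac{q(1+\varepsilon)}{p}}\Big)^{\frac{1}{q(1+\varepsilon)}}<\infty$. The small Lebesgue sequence space $l^{q)',\theta}$ consists of sequences $y=\{y_k\}_{k\in\mathbb Z}$ with $$\|y\|_{l^{q)',\theta}}:=\inf\Big\{\sum_{j\in\mathbb Z}\inf_{\varepsilon>0}\varepsilon^{\frac{-\theta}{q(1+\varepsilon)}}\Big(\sum_{k\in\mathbb Z}y_{k,j}^{(q(1+\varepsilon))'}\Big)^{\frac{1}{(q(1+\varepsilon))'}}\Big\}<\infty,$$ the outer infimum over all decompositions $|y_k|=\sum_{j\in\mathbb Z}y_{k,j}$ with $y_{k,j}\ge0$, and $(q(1+\varepsilon))'$ the conjugate exponent of $q(1+\varepsilon)$. The space $l^{q)',\theta}(L^p)$ consists of complex-valued measurable $f$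 on $\mathbb R$ with $f\chi_{I_k}\in L^p$ for all $k$ and $\|f\|_{p,q)',\theta}:=\big\|\{\|f\chi_{I_k}\|_{L^p}\}_{k\in\mathbb Z}\big\|_{l^{q)',\theta}}<\infty$. *)

(* Defs.v *)
From mathcomp Require Import all_boot all_order all_algebra.
From mathcomp Require Import all_classical all_reals all_analysis.
From mathcomp Require Import complex.
Import Order.TTheory GRing.Theory Num.Theory.

Set Implicit Arguments.
Unset Strict Implicit.
Unset Printing Implicit Defensive.

Local Open Scope classical_set_scope.
Local Open Scope ring_scope.

(* The real line equipped with the Lebesgue (= completed, Caratheodory)
   sigma-algebra, and the (completed) Lebesgue measure on it. *)
Notation LebR R := (caratheodory_type (R:=R) (@wlength R idfun)^*%mu).
Notation leb R := (@completed_lebesgue_measure R).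

Notation cabs z := (ComplexField.Normc.normc z).

Definition Iint (R : realType) (k : int) : set R :=
  [set x : R | k%:~R <= x < (k + 1)%:~R].

Definition cmeasurable (R : realType) (g : R -> R[i]) : Prop :=
  measurable_fun [set: LebR R] (fun x : LebR R => complex.Re (g x)) /\
  measurable_fun [set: LebR R] (fun x : LebR R => complex.Im (g x)).

Definition locint (R : realType) (p : R) (g : R -> R[i]) (k : int) : \bar R :=
  (\int[leb R]_(x in (Iint k : set (LebR R))) (powR (cabs (g x)) p)%:E)%E.

Definition norm_grand (R : realType) (p q theta : R) (g : R -> R[i]) : \bar R :=
  ereal_sup [set poweR ((powR eps theta)%:E *
                  \esum_(k in [set: int]) poweR (locint p g k) (q * (1 + eps) / p))%E
                 (1 / (q * (1 + eps)))
            | eps in [set eps : R | 0 < eps]].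

Definition in_grand (R : realType) (p q theta : R) (g : R -> R[i]) : Prop :=
  [/\ cmeasurable g,
      (forall k : int, (locint p g k < +oo)%E) &
      (norm_grand p q theta g < +oo)%E].

Definition conj_exp (R : realType) (r : R) : R := r / (r - 1).

Definition norm_small_seq (R : realType) (q theta : R) (y : int -> R) : \bar R :=
  ereal_inf
    [set \esum_(j in [set: int])
           ereal_inf
             [set ((powR eps (- theta / (q * (1 + eps))))%:E *
                   poweR (\esum_(k in [set: int])
                      (powR (Y k j) (conj_exp (q * (1 + eps))))%:E)
                     (1 / conj_exp (q * (1 + eps))))%E
             | eps in [set eps : R | 0 < eps]]
    | Y in [set Y : int -> int -> R |
              (forall k j, 0 <= Y k j) /\
              (forall k, (\esum_(j in [set: int]) (Y k j)%:E)%E = (`|y k|)%:E)]].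

Definition locnorm (R : realType) (p : R) (f : R -> R[i]) (k : int) : R :=
  fine (poweR (locint p f k) (1 / p)).

Definition in_small (R : realType) (p q theta : R) (f : R -> R[i]) : Prop :=
  [/\ cmeasurable f,
      (forall k : int, (locint p f k < +oo)%E) &
      (norm_small_seq q theta (locnorm p f) < +oo)%E].

Definition cchi (R : realType) (E : set R) : R -> R[i] :=
  fun x => Complex (\1_E x) 0.

(* Main.v *)
Require Import Defs.
From mathcomp Require Import all_boot all_order all_algebra.
From mathcomp Require Import all_classical all_reals all_analysis.
From mathcomp Require Import complex.
From mathcomp Require Import zify ring lra.
From mathcomp Require Import measurable_realfun.
Import Order.TTheory GRing.Theory Num.Theory.
Local Open Scope classical_set_scope.
Local Open Scope ring_scope.

Lemma cabsE (R : realType) (z : R[i]) :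
  cabs z = Num.sqrt (complex.Re z ^+ 2 + complex.Im z ^+ 2).
Proof. by case: z. Qed.

Lemma cabs_ge0 (R : realType) (z : R[i]) : 0 <= cabs z.
Proof. by rewrite cabsE sqrtr_ge0. Qed.

Lemma meas_cabs (R : realType) (g : R -> R[i]) : cmeasurable g ->
  measurable_fun [set: LebR R] (fun x : LebR R => cabs (g x)).
Proof.
move=> [mre mim].
rewrite (_ : (fun x => _) = (fun x : LebR R => Num.sqrt (complex.Re (g x) ^+ 2 + complex.Im (g x) ^+ 2))); last first.
  by apply/funext => x; rewrite cabsE.
apply: measurableT_comp; first exact: measurable_realfun.continuous_measurable_fun (@sqrt_continuous R).
by apply: measurable_realfun.measurable_funD; apply: measurable_realfun.measurable_funX.
Qed.

Lemma IintE (R : realType) (k : int) :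
  Iint k = [set` `[(k%:~R : R), (k + 1)%:~R[%R].
Proof. by apply/seteqP; split => x; rewrite /Iint /= in_itv. Qed.

Lemma meas_Iint (R : realType) (k : int) : measurable (Iint k : set (LebR R)).
Proof.
rewrite IintE; exact: sub_caratheodory.
Qed.

Lemma leb_Iint (R : realType) (k : int) : leb R (Iint k) = 1%E.
Proof.
rewrite IintE.
change (lebesgue_measure [set` `[(k%:~R : R), (k + 1)%:~R[%R] = 1%E).
rewrite lebesgue_measure_itv /= lte_fin ltr_int ltzD1 lexx.
by rewrite -EFinB intrD addrC addKr.
Qed.
Lemma esum_supp (R : realType) (K : nat) : exists C : R, 0 <= C /\
  forall f : int -> \bar R, (forall k, (0 <= f k <= 1)%E) ->
  (forall k, ~ ((- (K%:Z) <= k) && (k < K%:Z)) -> f k = 0%E) ->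
  (\esum_(k in [set: int]) f k <= C%:E)%E.
Proof.
pose s : seq int := [seq (i%:Z - K%:Z) | i <- iota 0 (2 * K)].
exists (\sum_(i <- finmap.enum_fset (fset_set [set` s])) (1:R)); split.
  by apply: sumr_ge0.
move=> f f01 f0.
rewrite (esumID [set` s]); last by move=> k _; case/andP: (f01 k).
rewrite (@esum1 _ _ (_ `&` ~` _)) ?adde0; last first.
  move=> k [_ /= ks]; apply: f0 => /andP[k1 k2]; apply: ks.
  apply/mapP; exists (absz (k + K%:Z)).
    rewrite mem_iota add0n /=.
    have hk : 0 <= k + K%:Z by rewrite -lerBlDr sub0r.
    rewrite -ltz_nat gez0_abs //; lia.
  have hk : 0 <= k + K%:Z by rewrite -lerBlDr sub0r.
  by rewrite gez0_abs ?addrK.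
rewrite setTI esum_fset; last 2 first.
- exact: finite_seq.
- by move=> k _; case/andP: (f01 k).
rewrite fsbig_finite ?finite_seq //= -sumEFin.
by apply: lee_sum => k _; case/andP: (f01 k).
Qed.

Lemma cabs_cchi (R : realType) (E : set R) x : cabs (cchi E x) = \1_E x.
Proof.
rewrite cabsE /cchi /= expr0n /= addr0 sqrtr_sqr ger0_norm //.
Qed.

Lemma powR_indic (R : realType) (E : set R) p x : 0 < p ->
  powR (\1_E x : R) p = \1_E x.
Proof.
move=> p0; rewrite /indic; case: (x \in E) => /=.
  by rewrite powR1.
by rewrite powR0 // gt_eqF.
Qed.

Lemma locint_cchi (R : realType) (E : set R) p k : 0 < p ->
  locint p (cchi E) k = (\int[leb R]_(x in (Iint k : set (LebR R))) (\1_E x)%:E)%E.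
Proof.
move=> p0; rewrite /locint; apply: eq_integral => x _.
by rewrite cabs_cchi powR_indic.
Qed.

Lemma locint_cchi01 (R : realType) (E : set R) p k : 0 < p ->
  measurable (E : set (LebR R)) ->
  (0 <= locint p (cchi E) k <= 1)%E.
Proof.
move=> p0 mE; rewrite locint_cchi //; apply/andP; split.
  by apply: integral_ge0 => x _; rewrite lee_fin; rewrite /indic; case: (x \in E).
apply: (@le_trans _ _ (\int[leb R]_(x in (Iint k : set (LebR R))) (cst 1%E x))%E).
  apply: ge0_le_integral.
  - exact: meas_Iint.
  - by move=> x _; rewrite lee_fin /indic; case: (x \in E).
  - apply/measurable_EFinP; apply: measurable_realfun.measurable_indic => //.
  - exact: measurable_cst.
  - by move=> x _; rewrite lee_fin /indic; case: (x \in E).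
rewrite integral_cst; last exact: meas_Iint.
change (1 * (leb R (Iint k : set (LebR R))) <= 1)%E.
by rewrite leb_Iint mul1e.
Qed.

Lemma supp_out (R : realType) (E : set R) (K : nat) :
  (forall x, E x -> - (K%:R) <= x < K%:R) ->
  forall k : int, ~ ((- (K%:Z) <= k) && (k < K%:Z)) ->
  forall x, Iint k x -> ~ E x.
Proof.
move=> hK k hk x /andP[xk1 xk2] Ex; apply: hk; case/andP: (hK x Ex) => h1 h2.
apply/andP; split.
  have : ((- (K%:Z))%:~R : R) < (k + 1)%:~R.
    by rewrite intrN; apply: le_lt_trans xk2.
  rewrite ltr_int => h; lia.
have : k%:~R < K%:R :> R by apply: le_lt_trans h2.
by rewrite -(ltr_int R).
Qed.

Lemma locint_cchi0 (R : realType) (E : set R) p (K : nat) k : 0 < p ->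
  (forall x, E x -> - (K%:R) <= x < K%:R) ->
  ~ ((- (K%:Z) <= k) && (k < K%:Z)) -> locint p (cchi E) k = 0%E.
Proof.
move=> p0 hK hk; rewrite locint_cchi //; apply: integral0_eq => x xI.
rewrite /indic memNset //. exact: (@supp_out R E K hK k hk x xI).
Qed.
Lemma ext_bnd (R : realType) (x : \bar R) (c : R) : (0 <= x)%E -> (x <= c%:E)%E ->
  exists2 y : R, x = y%:E & 0 <= y <= c.
Proof.
case: x => [y||] //=; rewrite ?lee_fin => y0 yc; first by exists y => //; apply/andP.
Qed.

Lemma arith_a (R : realType) (q theta eps s C : R) : 1 <= q -> 0 < theta -> 0 < eps ->
  0 <= s <= C ->
  powR (powR eps theta * s) (1 / (q * (1 + eps))) <= expR theta * (C + 1).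
Proof.
move=> q1 th0 e0 /andP[s0 sC].
have r0 : 0 < q * (1 + eps) by apply: mulr_gt0; lra.
have er : eps <= q * (1 + eps) by nra.
rewrite powRM ?powR_ge0 // -powRrM.
apply: ler_pM; rewrite ?powR_ge0 //.
  rewrite /powR gt_eqF // ler_expR.
  have hl : ln eps <= eps - 1.
    by have := @le_ln1Dx R (eps - 1); rewrite (_ : 1 + (eps - 1) = eps); [apply; lra | ring].
  have t0 : 0 <= theta * (1 / (q * (1 + eps))) by apply: mulr_ge0; [lra|rewrite divr_ge0 //; lra].
  apply: (@le_trans _ _ (theta * (1 / (q * (1 + eps))) * eps)).
    by apply: ler_wpM2l => //; lra.
  rewrite -mulrA mulrC; apply: ler_piMl; first lra.
  by rewrite mul1r mulrC ler_pdivrMr // mul1r.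
apply: (@le_trans _ _ (powR (C + 1) (1 / (q * (1 + eps))))).
  apply: ge0_ler_powR; rewrite ?nnegrE; try lra.
  by rewrite divr_ge0 //; lra.
apply: ler1_powR; first lra.
by rewrite ler_pdivrMr // mul1r; nra.
Qed.
Lemma grand_cchi_fin (R : realType) (p q theta : R) (E : set R) (K : nat) :
  1 <= p -> 1 <= q -> 0 < theta -> measurable (E : set (LebR R)) ->
  (forall x, E x -> - (K%:R) <= x < K%:R) ->
  (norm_grand p q theta (cchi E) < +oo)%E.
Proof.
move=> p1 q1 th0 mE hK.
have p0 : 0 < p by lra.
have [C [C0 HC]] := esum_supp R K.
apply: (@le_lt_trans _ _ (expR theta * (C + 1))%:E); last exact: ltry.
apply: ge_ereal_sup => _ [eps /= eps0 <-].
have r0 : 0 < q * (1 + eps) / p by apply: divr_gt0 => //; apply: mulr_gt0; lra.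
set S := (\esum_(k in _) _)%E.
have [s -> hs] : exists2 s : R, S = s%:E & 0 <= s <= C.
  apply: ext_bnd; first by apply: esum_ge0 => k _; exact: poweR_ge0.
  apply: HC => k.
    have [y -> /andP[y0 y1]] : exists2 y : R, locint p (cchi E) k = y%:E & 0 <= y <= 1.
      by case/andP: (locint_cchi01 R E p k p0 mE) => h1 h2; apply: ext_bnd.
    rewrite poweR_EFin !lee_fin powR_ge0 /=.
    have := @ge0_ler_powR R (q * (1 + eps) / p) (ltW r0) y 1.
    by rewrite powR1 !nnegrE; apply.
  by move=> hk; rewrite (locint_cchi0 R E p K k p0 hK hk) poweR0r // gt_eqF.
rewrite -EFinM poweR_EFin lee_fin.
exact: arith_a.
Qed.
Lemma esum_at0 (R : realType) (a : int -> \bar R) : (0 <= a 0%R)%E ->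
  (forall j : int, j != 0 -> a j = 0%E) -> (\esum_(j in [set: int]) a j = a 0%R)%E.
Proof.
move=> a0 aj.
rewrite (esumID [set 0%R]); last first.
  move=> j _; case: (eqVneq j 0) => [->//|/aj ->]; exact: lexx.
rewrite setTI esum_set1 // esum1 ?adde0 //.
by move=> j [_ /eqP jn0]; apply: aj.
Qed.

Lemma cmeas_cchi (R : realType) (E : set R) : measurable (E : set (LebR R)) ->
  cmeasurable (cchi E).
Proof.
move=> mE; split; first exact: measurable_indic.
exact: measurable_cst.
Qed.

Lemma bnd_K (R : realType) (E : set R) : (exists M : R, forall x, E x -> `|x| <= M) ->
  exists K : nat, forall x, E x -> - (K%:R) <= x < K%:R.
Proof.
move=> [M hM]; exists (Num.truncn M).+1 => x Ex.
have hx := hM x Ex.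
have hMK : M < (Num.truncn M).+1%:R by apply: real_truncnS_gt; rewrite num_real.
have : `|x| < (Num.truncn M).+1%:R by apply: le_lt_trans hMK.
rewrite ltr_norml => /andP[h1 h2]; rewrite h2 andbT; exact: ltW.
Qed.
Lemma locnorm_cchi (R : realType) (p : R) (E : set R) (K : nat) k : 1 <= p ->
  measurable (E : set (LebR R)) ->
  (forall x, E x -> - (K%:R) <= x < K%:R) ->
  0 <= locnorm p (cchi E) k <= 1 /\
  (~ ((- (K%:Z) <= k) && (k < K%:Z)) -> locnorm p (cchi E) k = 0).
Proof.
move=> p1 mE hK; have p0 : 0 < p by lra.
split; last first.
  move=> hk; rewrite /locnorm (locint_cchi0 R E p K k p0 hK hk) poweR0r //.
  by rewrite div1r invr_neq0 // gt_eqF.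
rewrite /locnorm.
have [y -> /andP[y0 y1]] : exists2 y : R, locint p (cchi E) k = y%:E & 0 <= y <= 1.
  by case/andP: (locint_cchi01 R E p k p0 mE) => h1 h2; apply: ext_bnd.
rewrite poweR_EFin /= powR_ge0 /=.
have := @ge0_ler_powR R (1 / p) _ y 1.
rewrite powR1 !nnegrE; apply => //.
by rewrite divr_ge0 //; lra.
Qed.

Lemma small_cchi_fin (R : realType) (p q theta : R) (E : set R) (K : nat) :
  1 <= p -> 1 <= q -> 0 < theta -> measurable (E : set (LebR R)) ->
  (forall x, E x -> - (K%:R) <= x < K%:R) ->
  (norm_small_seq q theta (locnorm p (cchi E)) < +oo)%E.
Proof.
move=> p1 q1 th0 mE hK.
have [C [C0 HC]] := esum_supp R K.
set y := locnorm p (cchi E).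
pose Y (k j : int) := if j == 0 then `|y k| else 0.
set r' := conj_exp (q * (1 + 1)).
have r'0 : 0 < r'.
  by rewrite /r' /conj_exp; apply: divr_gt0; nra.
pose V := ((powR 1 (- theta / (q * (1 + 1))))%:E *
   poweR (\esum_(k in [set: int]) (powR (Y k 0) r')%:E) (1 / r'))%E.
apply: (@le_lt_trans _ _ (\esum_(j in [set: int]) (if j == 0%R then V else 0%E))%E).
  apply: (le_trans (ereal_inf_lbound _)).
    exists Y; last reflexivity.
    split.
      by move=> k j; rewrite /Y; case: ifP.
    move=> k; rewrite (@esum_at0 R (fun j => (Y k j)%:E)) /Y ?eqxx //.
    by move=> j /negPf ->.
  apply: le_esum => j _.
  case: (eqVneq j 0) => [->|jn0].
    by apply: ereal_inf_lbound; hnf; exists 1%R => //; rewrite /= ltr01.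
  rewrite ?(negPf jn0); apply: (le_trans (ereal_inf_lbound _)).
    by hnf; exists 1%R => //; rewrite /= ltr01.
  rewrite /= /Y (negPf jn0).
  rewrite (@esum1 _ _ _ (fun k => (powR 0 r')%:E)); last first.
    by move=> k _; rewrite powR0 // gt_eqF.
  by rewrite poweR0r ?mule0 // div1r invr_neq0 // gt_eqF.
rewrite esum_at0; last 2 first.
- rewrite eqxx /V powR1 mul1e; exact: poweR_ge0.
- by move=> j /negPf ->.
rewrite eqxx /V.
have [s -> hs] : exists2 s : R,
    (\esum_(k in [set: int]) (powR (Y k 0) r')%:E)%E = s%:E & 0 <= s <= C.
  apply: ext_bnd; first by apply: esum_ge0 => k _; rewrite lee_fin powR_ge0.
  apply: HC => k.
    have [h01 _] := locnorm_cchi R p E K k p1 mE hK.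
    rewrite /Y eqxx !lee_fin powR_ge0 /=.
    have := @ge0_ler_powR R r' (ltW r'0) `|y k| 1.
    rewrite powR1 !nnegrE; apply => //; case/andP: h01 => h0 h1.
    by rewrite ger0_norm.
  move=> hk; have [_ h0] := locnorm_cchi R p E K k p1 mE hK.
  by rewrite /Y eqxx /y h0 // normr0 powR0 // gt_eqF.
by rewrite poweR_EFin -EFinM ltry.
Qed.
Lemma arith_c (R : realType) (p q a T n : R) : 1 <= p -> 1 <= q -> 0 <= a ->
  powR a (q * (1 + 1) / p) <= T -> powR T (1 / (q * (1 + 1))) <= n -> a <= powR n p.
Proof.
move=> p1 q1 a0 haT hTn.
have p0 : 0 < p by lra.
have r0 : 0 < q * (1 + 1) by nra.
have -> : a = powR (powR a (1 / p)) p.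
  rewrite -powRrM (_ : 1 / p * p = 1); first by rewrite powRr1.
  by field; rewrite gt_eqF.
apply: ge0_ler_powR; rewrite ?nnegrE ?powR_ge0; try lra.
  by apply: le_trans (powR_ge0 T _) hTn.
apply: le_trans hTn.
have -> : powR a (1 / p) = powR (powR a (q * (1 + 1) / p)) (1 / (q * (1 + 1))).
  rewrite -powRrM; congr powR.
  field; apply/andP; split; rewrite gt_eqF //; lra.
apply: ge0_ler_powR; rewrite ?nnegrE ?powR_ge0 //.
  by rewrite divr_ge0 //; lra.
exact: le_trans (powR_ge0 _ _) haT.
Qed.

Lemma young_pt (R : realType) (p A t : R) : 1 < p -> 0 < A -> 0 <= t ->
  t <= A * powR (A^-1) p / p * powR t p + A * (1 - p^-1).
Proof.
move=> p1 A0 t0.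
have p0 : 0 < p by lra.
set q := p / (p - 1).
have q0 : 0 < q by rewrite /q divr_gt0 //; lra.
have pq : p^-1 + q^-1 = 1.
  by rewrite /q invf_div; field; rewrite gt_eqF.
have Ai0 : 0 <= A^-1 by rewrite invr_ge0 ltW.
have := @conjugate_powR R (t * A^-1) 1 p q (mulr_ge0 t0 Ai0) ler01 p0 q0 pq.
rewrite mulr1 powR1 powRM // => h.
have e1 : t = A * (t * A^-1) by field; rewrite gt_eqF.
have eq : A * (powR t p * powR (A^-1) p / p + 1 / q) =
    A * powR (A^-1) p / p * powR t p + A * (1 - p^-1).
  rewrite (_ : 1 / q = 1 - p^-1); first ring.
  by rewrite div1r -pq addrAC subrr add0r.
rewrite {1}e1 -eq; apply: ler_wpM2l; [exact: ltW | exact: h].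
Qed.
Lemma int_Ik (R : realType) (p : R) (g : R -> R[i]) (k : int) (n : R) :
  1 <= p -> cmeasurable g -> 0 <= n ->
  (locint p g k <= (powR n p)%:E)%E ->
  (\int[leb R]_(x in (Iint k : set (LebR R))) (cabs (g x))%:E <= n%:E)%E.
Proof.
move=> p1 mg n0 hloc.
have mI := meas_Iint R k.
have mt := meas_cabs R g mg.
have mtI : measurable_fun (Iint k : set (LebR R)) (fun x => cabs (g x)).
  exact: (measurable_funTS mt).
have mtpI : measurable_fun (Iint k : set (LebR R)) (fun x => powR (cabs (g x)) p).
  exact: (measurable_funTS (measurableT_comp (measurable_powR p) mt)).
have [a ha /andP[a0 an]] : exists2 a : R, locint p g k = a%:E & 0 <= a <= powR n p.
  apply: ext_bnd => //; apply: integral_ge0 => x _; rewrite lee_fin powR_ge0 //.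
case: (eqVneq p 1) => [p_1|pn1].
  have <- : locint p g k = (\int[leb R]_(x in (Iint k : set (LebR R))) (cabs (g x))%:E)%E.
    by apply: eq_integral => x _; rewrite p_1 powRr1 // cabs_ge0.
  by rewrite ha lee_fin; move: an; rewrite p_1 powRr1.
have p1' : 1 < p by rewrite lt_neqAle eq_sym pn1.
have p0 : 0 < p by lra.
apply/lee_addgt0Pr => e e0.
set A := n + e.
have A0 : 0 < A by rewrite /A; lra.
set c1 := A * powR A^-1 p / p.
set c2 := A * (1 - p^-1).
have c10 : 0 <= c1 by rewrite /c1 divr_ge0 ?mulr_ge0 ?powR_ge0 //; lra.
have c20 : 0 <= c2.
  rewrite /c2 mulr_ge0 //; first lra.
  rewrite subr_ge0 invf_le1 //; lra.
apply: (@le_trans _ _ (\int[leb R]_(x in (Iint k : set (LebR R)))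
                         ((c1 * powR (cabs (g x)) p + c2)%:E))%E).
  apply: (ge0_le_integral _ mI).
  - by move=> x _; rewrite lee_fin cabs_ge0.
  - exact/measurable_EFinP.
  - apply/measurable_EFinP; apply: measurable_funD.
      apply: measurable_funM; [exact: measurable_cst | exact: mtpI].
    exact: measurable_cst.
  - move=> x _; rewrite lee_fin /c1 /c2; exact: (young_pt R p A (cabs (g x)) p1' A0 (cabs_ge0 _ _)).
have eqI : (\int[leb R]_(x in (Iint k : set (LebR R)))
                         ((c1 * powR (cabs (g x)) p + c2)%:E) = c1%:E * a%:E + c2%:E)%E.
  under eq_integral do rewrite EFinD EFinM.
  rewrite (ge0_integralD _ mI); last 4 first.
  - by move=> x _; rewrite -EFinM lee_fin mulr_ge0 // powR_ge0.
  - apply/measurable_EFinP; apply: measurable_funM; [exact: measurable_cst | exact: mtpI].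
  - by move=> x _; rewrite lee_fin.
  - exact: measurable_cst.
  rewrite (ge0_integralZl _ mI); last 3 first.
  - exact/measurable_EFinP.
  - by move=> x _; rewrite lee_fin powR_ge0.
  - by rewrite lee_fin.
  rewrite -ha /locint; congr (_ + _)%E.
  rewrite (integral_cst _ mI).
  change (c2%:E * (leb R (Iint k : set (LebR R))) = c2%:E)%E.
  by rewrite leb_Iint mule1.
rewrite eqI -EFinM -EFinD lee_fin.
apply: (@le_trans _ _ (c1 * powR A p + c2)).
  rewrite lerD2r; apply: ler_wpM2l => //.
  apply: (le_trans an); apply: ge0_ler_powR; rewrite ?nnegrE /A; lra.
have hA : powR A^-1 p * powR A p = 1.
  by rewrite -powRM ?invr_ge0 ?ltW // mulVf ?gt_eqF // powR1.
have -> : c1 * powR A p + c2 = A.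
  rewrite /c1 /c2.
  have -> : A * powR A^-1 p / p * powR A p = A / p * (powR A^-1 p * powR A p) by ring.
  by rewrite hA mulr1; field; rewrite gt_eqF.
by rewrite /A.
Qed.
Definition Jset (R : realType) (a : int) (m : nat) : set R :=
  [set x : R | a%:~R <= x < (a + m%:Z)%:~R].

Lemma meas_Jset (R : realType) a m : measurable (Jset R a m : set (LebR R)).
Proof.
have -> : Jset R a m = [set` `[(a%:~R : R), (a + m%:Z)%:~R[%R].
  by apply/seteqP; split => x; rewrite /Jset /= in_itv.
exact: sub_caratheodory.
Qed.

Lemma Jset0 (R : realType) a : Jset R a 0 = set0.
Proof.
apply/seteqP; split => x //=; rewrite /Jset /= addr0 => /andP[h1 h2].
by have := le_lt_trans h1 h2; rewrite ltxx.
Qed.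

Lemma JsetS (R : realType) a m :
  Jset R a m.+1 = Jset R a m `|` Iint (a + m%:Z).
Proof.
apply/seteqP; split => x /=; rewrite /Jset /Iint /=.
  move=> /andP[h1 h2]; case: (ltP x (a + m%:Z)%:~R) => hx.
    by left; rewrite h1.
  by right; move: h2; rewrite -addrA -PoszD addn1.
case=> /andP[h1 h2].
  rewrite h1 /=; apply: (lt_le_trans h2); rewrite ler_int lerD2l; lia.
apply/andP; split.
  apply: le_trans h1; rewrite ler_int lerDl; lia.
by move: h2; rewrite -addrA -PoszD addn1.
Qed.

Lemma Jset_disj (R : realType) a m :
  [disjoint (Jset R a m : set (LebR R)) & (Iint (a + m%:Z) : set (LebR R))].
Proof.
rewrite disj_set2E; apply/eqP/seteqP; split => x //=.
rewrite /Jset /Iint /= => -[/andP[_ h1] /andP[h2 _]].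
by have := lt_le_trans h1 h2; rewrite ltxx.
Qed.

Lemma int_J (R : realType) (p : R) (g : R -> R[i]) (n : R) (a : int) :
  1 <= p -> cmeasurable g -> 0 <= n ->
  (forall k, (locint p g k <= (powR n p)%:E)%E) -> forall m : nat,
  (\int[leb R]_(x in (Jset R a m : set (LebR R))) (cabs (g x))%:E <= (m%:R * n)%:E)%E.
Proof.
move=> p1 mg n0 hl; elim=> [|m IH].
  by rewrite Jset0 integral_set0 mul0r.
have mt := meas_cabs R g mg.
rewrite JsetS (ge0_integral_setU _ (meas_Jset R a m) (meas_Iint R (a + m%:Z))).
- rewrite -addn1 natrD mulrDl mul1r EFinD; apply: leeD => //.
  exact: (int_Ik R p g (a + m%:Z) n p1 mg n0 (hl _)).
- apply/measurable_EFinP; exact: (measurable_funTS mt).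
- by move=> x _; rewrite lee_fin cabs_ge0.
- exact: Jset_disj.
Qed.

Lemma locint_le_norm (R : realType) (p q theta : R) (g : R -> R[i]) (n : R) :
  1 <= p -> 1 <= q -> in_grand p q theta g -> norm_grand p q theta g = n%:E ->
  forall k, (locint p g k <= (powR n p)%:E)%E.
Proof.
move=> p1 q1 [mg hfin _] hn k.
have p0 : 0 < p by lra.
have helt : (poweR ((powR 1 theta)%:E *
    \esum_(j in [set: int]) poweR (locint p g j) (q * (1 + 1) / p))
    (1 / (q * (1 + 1))) <= n%:E)%E.
  by rewrite -hn; apply: ereal_sup_ubound; hnf; exists 1%R => //; rewrite /= ltr01.
have [a ha a0] : exists2 a : R, locint p g k = a%:E & 0 <= a.
  have h0 : (0 <= locint p g k)%E.
    by apply: integral_ge0 => x _; rewrite lee_fin powR_ge0.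
  move: h0 (hfin k); case: (locint p g k) => [a||] //= h0 _.
  by exists a => //; rewrite -lee_fin.
have hS : ((powR a (q * (1 + 1) / p))%:E <=
    \esum_(j in [set: int]) poweR (locint p g j) (q * (1 + 1) / p))%E.
  apply: esum_ge; exists [set k]; first by split; [exact: finite_set1 | ].
  by rewrite fsbig_set1 ha poweR_EFin.
move: helt hS; rewrite powR1 mul1e.
case: (\esum_(j in [set: int]) _)%E => [T||] /=.
- rewrite !lee_fin => hTn haT; rewrite ha lee_fin.
  exact: (arith_c R p q a T n p1 q1 a0 haT hTn).
- have -> : (1 / (q * (1 + 1)) == 0) = false.
    by apply/negbTE; rewrite div1r invr_neq0 // gt_eqF //; nra.
  by [].
- by [].
Qed.
Theorem theorem3p10 (R : realType) (p q theta : R) (E : set R) :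
  1 <= p -> 1 <= q -> 0 < theta ->
  measurable (E : set (LebR R)) ->
  (exists M : R, forall x, E x -> `|x| <= M) ->
  [/\ in_grand p q theta (cchi E),
      in_small p q theta (cchi E) &
      exists cE : R, 0 < cE /\
        forall g : R -> R[i], in_grand p q theta g ->
          (\int[leb R]_(x in (E : set (LebR R))) (cabs (g x))%:E
             <= cE%:E * norm_grand p q theta g)%E].
Proof.
move=> p1 q1 th0 mE hb.
have [K hK] := bnd_K R E hb.
have p0 : 0 < p by lra.
have hfin : forall k, (locint p (cchi E) k < +oo)%E.
  move=> k; case/andP: (locint_cchi01 R E p k p0 mE) => _ h.
  exact: le_lt_trans h (ltry _).
split.
- split; [exact: cmeas_cchi | exact: hfin | exact: (grand_cchi_fin R p q theta E K p1 q1 th0 mE hK)].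
- split; [exact: cmeas_cchi | exact: hfin | exact: (small_cchi_fin R p q theta E K p1 q1 th0 mE hK)].
exists (2 * K).+1%:R; split; first exact: ltr0Sn.
move=> g hg.
have n0 : (0 <= norm_grand p q theta g)%E.
  apply: le_trans (poweR_ge0 _ (1 / (q * (1 + 1)))) _.
  by apply: ereal_sup_ubound; hnf; exists 1%R => //; rewrite /= ltr01.
case hn: (norm_grand p q theta g) n0 => [n||] //= n0; last first.
  by rewrite mulry gtr0_sg ?ltr0Sn // mul1e leey.
have [mg _ _] := hg.
have mt := meas_cabs R g mg.
have EJ : (E : set (LebR R)) `<=` Jset R (- (K%:Z)) (2 * K).
  move=> x Ex; case/andP: (hK x Ex) => h1 h2; rewrite /Jset /=.
  have -> : (- (K%:Z) + (2 * K)%N%:Z) = K%:Z by lia.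
  by rewrite intrN h1.
apply: le_trans (ge0_subset_integral _ mE (meas_Jset R _ _) _ _ EJ) _.
- apply/measurable_EFinP; exact: (measurable_funTS mt).
- by move=> x _; rewrite lee_fin cabs_ge0.
apply: le_trans (int_J R p g n (- (K%:Z)) p1 mg n0 (locint_le_norm R p q theta g n p1 q1 hg hn) (2 * K)) _.
rewrite -EFinM lee_fin ler_wpM2r // ler_nat; lia.
Qed.
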